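(* Let $N\ge 1$ and let $S\subset\mathbb{P}^1\times\mathbb{P}^1$ be a real curve of bidegree $(N,N)$ not intersecting the anti-diagonal $\bar\Delta$, and suppose $S$ admits a grid determined by distinct points $\gamma_0,\dots,\gamma_N\in\mathbb{C}$, i.e. $$\{(-1/\bar\gamma_i,\gamma_j)\ :\ 0\le i\neq j\le N\}\subset S .$$ Then there exist positive real numbers $\lambda_0,\dots,\lambda_N$ such that $S$ is the curve $$\sum_{i=0}^N\lambda_i^2\prod_{\substack{j=0\\ j\neq i}}^N(\zeta-\gamma_j)(1+\eta\bar\gamma_j)=0,$$ i.e. $S$ is the spectral curve determined by the JNR data with poles $\gamma_0,\dots,\gamma_N$ and weights $\lambda_0,\dots,\lambda_N$.
   Context: $\mathbb{P}^1\times\mathbb{P}^1$ has affine coordinates $(\eta,\zeta)$. A curve of bidegree $(N,N)$ is the zero set of a nonzero polynomial $p(\eta,\zeta)$ of degree at most $N$ in each variable (a section of $\mathcal{O}(N,N)$). The anti-diagonal is $\bar\Delta=\{(\eta,\zeta):\eta=-1/\bar\zeta\}$. The curve is real if it is invariant under the anti-holomorphic involution $\tau(\eta,\zeta)=(-1/\bar\zeta,-1/\bar\eta)$. For $\gamma=0$ the point $-1/\bar\gamma$ means $\infty\in\mathbb{P}^1$. A grid determined by distinct points $\gamma_0,\dots,\gamma_N$ is the set $\{(-1/\bar\gamma_i,\gamma_j):0\le i\neq j\le N\}$, and a curve admits a grid if it contains such a set. *)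

(* Defs.v *)
From mathcomp Require Import all_boot all_order all_algebra complex.
From mathcomp Require Import reals Rstruct.
Set Implicit Arguments. Unset Strict Implicit. Unset Printing Implicit Defensive.
Import Order.TTheory GRing.Theory Num.Theory.
Local Open Scope ring_scope.

Definition C : numClosedFieldType := (Rdefinitions.R)[i].

(* The Riemann sphere P^1: [Some z] is the affine point z, [None] is infinity. *)
Definition P1 := option C.

(* A curve of bidegree (N,N): coefficient matrix of p(eta,zeta) = sum a_kl eta^k zeta^l,
   0 <= k,l <= N.  Evaluation of the bihomogenization
   P(eta0,eta1;zeta0,zeta1) = sum a_kl eta0^k eta1^(N-k) zeta0^l zeta1^(N-l)
   at the point with affine coordinates (eta,zeta), infinity being (1:0). *)
Definition mono (N k : nat) (x : P1) : C :=
  match x with Some z => z ^+ k | None => (k == N)%:R end.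

Definition bieval (N : nat) (a : 'M[C]_(N.+1, N.+1)) (eta zeta : P1) : C :=
  \sum_(k < N.+1) \sum_(l < N.+1) a k l * mono N k eta * mono N l zeta.

Definition zeroset (N : nat) (a : 'M[C]_(N.+1, N.+1)) (x : P1 * P1) : Prop :=
  bieval a x.1 x.2 = 0.

Definition antip (x : P1) : P1 :=
  match x with
  | Some z => if z == 0 then None else Some (- (Num.conj z)^-1)
  | None => Some 0
  end.

Definition tau (x : P1 * P1) : P1 * P1 := (antip x.2, antip x.1).

Definition antidiag (x : P1 * P1) : Prop := x.1 = antip x.2.

Definition real_curve (N : nat) (a : 'M[C]_(N.+1, N.+1)) : Prop :=
  forall x, zeroset a x <-> zeroset a (tau x).

Definition admits_grid (N : nat) (a : 'M[C]_(N.+1, N.+1)) (g : 'I_N.+1 -> C) : Prop :=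
  forall i j : 'I_N.+1, i != j -> zeroset a (antip (Some (g i)), Some (g j)).

Definition zfac (g : C) (zeta : P1) : C :=
  match zeta with Some z => z - g | None => 1 end.
Definition efac (g : C) (eta : P1) : C :=
  match eta with Some e => 1 + e * Num.conj g | None => Num.conj g end.

Definition jnr_eval (N : nat) (g : 'I_N.+1 -> C) (lam : 'I_N.+1 -> Rdefinitions.R)
    (x : P1 * P1) : C :=
  \sum_(i < N.+1) ((lam i) ^+ 2)%:C%C * \prod_(j < N.+1 | j != i) (zfac (g j) x.2 * efac (g j) x.1).

(* Main.v *)
Require Import Defs.
From mathcomp Require Import all_boot all_order all_algebra complex.
From mathcomp Require Import reals Rstruct.
From mathcomp Require Import all_field polyrcf zify ring lra.
From mathcomp Require Import complex.
From Stdlib Require Import Lia.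
Set Implicit Arguments. Unset Strict Implicit. Unset Printing Implicit Defensive.
Import Order.TTheory GRing.Theory Num.Theory.
Local Open Scope ring_scope.

Lemma count_neq (N : nat) (i : 'I_N.+1) :
  count (fun j => j != i) (index_enum 'I_N.+1) = N.
Proof.
have := cardC1 i; rewrite card_ord /= => e.
rewrite -[RHS]e cardE /enum_mem size_filter; apply: eq_count => j //.
Qed.

Definition heval (n : nat) (q : {poly C}) (x : P1) : C :=
  match x with Some z => q.[z] | None => q`_n end.

Definition isform (n : nat) (F : P1 -> C) :=
  exists2 q : {poly C}, (size q <= n.+1)%N & forall x, F x = heval n q x.

Lemma isform_ext n F G : isform n F -> (forall x, G x = F x) -> isform n G.
Proof. by case=> q hq hF hG; exists q => // x; rewrite hG hF. Qed.

Lemma isform0 n : isform n (fun _ => 0).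
Proof. by exists 0; rewrite ?size_poly0 // => [[z|]] /=; rewrite ?horner0 ?coef0. Qed.

Lemma isformD n F G : isform n F -> isform n G -> isform n (fun x => F x + G x).
Proof.
case=> p hp hF [q hq hG]; exists (p + q).
  by apply: leq_trans (size_add _ _) _; rewrite geq_max hp hq.
by case=> [z|] /=; rewrite hF hG /= ?hornerD ?coefD.
Qed.

Lemma isformZ n c F : isform n F -> isform n (fun x => c * F x).
Proof.
case=> p hp hF; exists (c *: p).
  by apply: leq_trans (size_scale_leq _ _) _.
by case=> [z|] /=; rewrite hF /= ?hornerZ ?coefZ.
Qed.

Lemma isform_sum n (I : Type) (r : seq I) (P : pred I) (F : I -> P1 -> C) :
  (forall i, P i -> isform n (F i)) ->
  isform n (fun x => \sum_(i <- r | P i) F i x).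
Proof.
move=> hF; elim: r => [|i r IH].
  by apply: (isform_ext (isform0 n)) => x; rewrite big_nil.
case Pi: (P i).
  by apply: (isform_ext (isformD (hF i Pi) IH)) => x; rewrite big_cons Pi.
by apply: (isform_ext IH) => x; rewrite big_cons Pi.
Qed.

Lemma coefM_deg (p q : {poly C}) n m :
  (size p <= n.+1)%N -> (size q <= m.+1)%N -> (p * q)`_(n + m) = p`_n * q`_m.
Proof.
move=> hp hq; rewrite coefM (bigD1 (Ordinal (leq_addr m n.+1))) //= addKn.
rewrite big1 ?addr0 // => -[j jlt] /eqP hj.
have jn' : j <> n by move=> e; apply: hj; apply: val_inj.
rewrite /=.
have [jn|nj] := ltnP j n.
  rewrite [q`_ _]nth_default ?mulr0 //.
  apply: leq_trans hq _; move: jn; clear; lia.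
rewrite [p`_ _]nth_default ?mul0r //; apply: leq_trans hp _.
move: nj jn'; clear; lia.
Qed.

Lemma isformM n m F G : isform n F -> isform m G -> isform (n + m) (fun x => F x * G x).
Proof.
case=> p hp hF [q hq hG]; exists (p * q).
  apply: leq_trans (size_mul_leq _ _) _; move: hp hq; clear; lia.
case=> [z|] /=; rewrite hF hG /= ?hornerM //.
by rewrite coefM_deg.
Qed.

Lemma isform_prod (I : Type) (r : seq I) (P : pred I) (F : I -> P1 -> C) :
  (forall i, P i -> isform 1 (F i)) ->
  isform (count P r) (fun x => \prod_(i <- r | P i) F i x).
Proof.
move=> hF; elim: r => [|i r IH] /=.
  exists 1; first by rewrite size_poly1.
  by case=> [z|] /=; rewrite big_nil ?hornerC ?coefC.
case Pi: (P i) => /=.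
  by apply: (isform_ext (isformM (hF i Pi) IH)) => x; rewrite big_cons Pi.
by apply: (isform_ext IH) => x; rewrite big_cons Pi.
Qed.

Lemma form_zero n F (s : seq P1) : isform n F -> uniq s -> (n.+1 <= size s)%N ->
  (forall x, x \in s -> F x = 0) -> forall x, F x = 0.
Proof.
case=> q hq hF us hs h0.
suff q0 : q = 0 by move=> x; rewrite hF q0; case: x => [z|] /=; rewrite ?horner0 ?coef0.
apply/eqP; apply: contraT => qn0.
pose rs := pmap id s.
have urs : uniq rs by apply: (@pmap_uniq _ _ id Some) => // -[].
have ars : all (root q) rs.
  apply/allP => z; rewrite mem_pmap map_id => /h0; rewrite hF /=.
  by move=> e; apply/rootP.
have := max_poly_roots qn0 ars urs.
have szrs : size rs = (size s - (None \in s))%N.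
  rewrite size_pmap -(count_predC (fun x => isSome (id x)) s) .
  have -> : count (predC (fun x : P1 => isSome (id x))) s = count_mem None s.
    by apply: eq_count => -[].
  by rewrite count_uniq_mem // addnK.
case Ns: (None \in s) szrs => szrs.
  have qn : q`_n = 0 by have := h0 _ Ns; rewrite hF.
  have : (size q <= n)%N.
    rewrite leq_eqVlt in hq; case/orP: hq => [/eqP e|]; last by [].
    move: qn0; rewrite -lead_coef_eq0 /lead_coef e /= qn eqxx //.
  rewrite szrs /=; move: hs; clear => h1 h2 h3.
  have h2' : (size q <= n)%N by exact: h2.
  have h3' : (size s - 1 < size q)%N by exact: h3.
  move: h1 h2' h3'; clear; move: (size q) => k; lia.
rewrite szrs /= subn0; move: hs hq; clear => h1 h2 h3.
have h2' : (size q <= n.+1)%N by exact: h2.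
have h3' : (size s < size q)%N by exact: h3.
move: h1 h2' h3'; clear; move: (size q) => k; lia.
Qed.

Lemma mono_form N k : (k <= N)%N -> isform N (mono N k).
Proof.
move=> kN; exists 'X^k; first by rewrite size_polyXn.
by case=> [z|] /=; rewrite ?hornerXn // coefXn eq_sym.
Qed.

Lemma bieval_form_z N (a : 'M[C]_(N.+1, N.+1)) eta : isform N (fun zeta => bieval a eta zeta).
Proof.
apply: isform_sum => k _; apply: isform_sum => l _.
have hl : (l <= N)%N by rewrite -ltnS.
by apply: (isform_ext (isformZ (a k l * mono N k eta) (mono_form hl))).
Qed.

Lemma bieval_form_e N (a : 'M[C]_(N.+1, N.+1)) zeta : isform N (fun eta => bieval a eta zeta).
Proof.
apply: (isform_ext (F := fun eta => \sum_(k < N.+1) \sum_(l < N.+1)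
          (a k l * mono N l zeta) * mono N k eta)).
  apply: isform_sum => k _; apply: isform_sum => l _.
  have hk : (k <= N)%N by rewrite -ltnS.
  by apply: (isform_ext (isformZ (a k l * mono N l zeta) (mono_form hk))).
by move=> eta; rewrite /bieval; apply: eq_bigr => k _; apply: eq_bigr => l _; rewrite mulrAC.
Qed.

Lemma zfac_form g : isform 1 (zfac g).
Proof.
exists ('X - g%:P); first by rewrite size_XsubC.
by case=> [z|] /=; rewrite ?hornerXsubC // coefB coefX coefC /= subr0.
Qed.

Lemma efac_form g : isform 1 (efac g).
Proof.
exists (1 + Num.conj g *: 'X).
  apply: leq_trans (size_add _ _) _; rewrite geq_max size_poly1 /=.
  by apply: leq_trans (size_scale_leq _ _) _; rewrite size_polyX.
case=> [z|] /=; first by rewrite hornerD hornerC hornerZ hornerX mulrC.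
by rewrite coefD coefC coefZ coefX /= add0r mulr1.
Qed.

Definition Pi N (g : 'I_N.+1 -> C) (i : 'I_N.+1) (eta zeta : P1) : C :=
  \prod_(j < N.+1 | j != i) (zfac (g j) zeta * efac (g j) eta).

Lemma Pi_split N g i eta zeta : @Pi N g i eta zeta =
  (\prod_(j < N.+1 | j != i) efac (g j) eta) * \prod_(j < N.+1 | j != i) zfac (g j) zeta.
Proof. by rewrite /Pi big_split /= mulrC. Qed.

Lemma prod_form N (g : 'I_N.+1 -> C) i (f : C -> P1 -> C) :
  (forall c, isform 1 (f c)) ->
  isform N (fun x => \prod_(j < N.+1 | j != i) f (g j) x).
Proof.
move=> hf; have := @isform_prod _ (index_enum 'I_N.+1) (fun j => j != i) (fun j => f (g j)).
by rewrite count_neq; apply.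
Qed.

Lemma Pi_form_z N g i eta : isform N (fun zeta => @Pi N g i eta zeta).
Proof.
have h := isformZ (\prod_(j < N.+1 | j != i) efac (g j) eta) (prod_form g i zfac_form).
by apply: (isform_ext h) => zeta; rewrite Pi_split.
Qed.

Lemma Pi_form_e N g i zeta : isform N (fun eta => @Pi N g i eta zeta).
Proof.
have h := isformZ (\prod_(j < N.+1 | j != i) zfac (g j) zeta) (prod_form g i efac_form).
by apply: (isform_ext h) => eta; rewrite Pi_split mulrC.
Qed.

Lemma antipK : cancel antip antip.
Proof.
case=> [z|] /=; last by rewrite eqxx.
have [->|z0] := eqVneq z 0; first by [].
rewrite /= oppr_eq0 invr_eq0 conjC_eq0 (negPf z0).
by rewrite rmorphN fmorphV /= conjCK invrN invrK opprK.
Qed.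

Lemma antip_inj : injective antip.
Proof. exact: can_inj antipK. Qed.

Lemma efac_antip0 g : efac g (antip (Some g)) = 0.
Proof.
rewrite /=; have [->|g0] := eqVneq g 0; first by rewrite /= rmorph0.
by rewrite /= mulNr mulVf ?subrr // conjC_eq0.
Qed.

Lemma efac_antip_neq g h : h != g -> efac h (antip (Some g)) != 0.
Proof.
move=> hg; rewrite /=; have [g0|g0] := eqVneq g 0.
  by rewrite /= conjC_eq0 -g0.
rewrite /= mulNr subr_eq0 eq_sym.
apply: contra hg => /eqP e.
have gn0 : g^* != 0 by rewrite conjC_eq0.
have : h^* = g^* by rewrite -[LHS](mulVKf gn0) e mulr1.
by move/(can_inj conjCK) => ->.
Qed.

Lemma zfac_self g : zfac g (Some g) = 0.
Proof. by rewrite /= subrr. Qed.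

Lemma isformN n F : isform n F -> isform n (fun x => - F x).
Proof. by move=> h; apply: (isform_ext (isformZ (-1) h)) => x; rewrite mulN1r. Qed.

Section Step1.
Variables (N : nat) (a : 'M[C]_(N.+1, N.+1)) (g : 'I_N.+1 -> C).
Hypothesis ginj : injective g.
Hypothesis hgrid : admits_grid a g.
Hypothesis hanti : forall x, zeroset a x -> ~ antidiag x.

Definition delta (i : 'I_N.+1) := antip (Some (g i)).

Lemma delta_inj : injective delta.
Proof. by move=> i j /antip_inj [] /ginj. Qed.

Lemma Pi_zero_z i l eta : l != i -> Pi g i eta (Some (g l)) = 0.
Proof. by move=> li; rewrite /Pi (bigD1 l) // zfac_self mul0r /= mul0r. Qed.

Lemma Pi_zero_e i k zeta : k != i -> Pi g i (delta k) zeta = 0.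
Proof. by move=> ki; rewrite /Pi (bigD1 k) // [efac _ _]efac_antip0 mulr0 /= mul0r. Qed.

Lemma Pi_grid i k l : k != l -> Pi g i (delta k) (Some (g l)) = 0.
Proof.
move=> kl; have [li|li] := eqVneq l i; last exact: Pi_zero_z.
by apply: Pi_zero_e; rewrite -li.
Qed.

Lemma Pi_diag_neq0 i : Pi g i (delta i) (Some (g i)) != 0.
Proof.
rewrite /Pi; apply/prodf_neq0 => j ji; rewrite mulf_neq0 //=.
  by rewrite subr_eq0; apply: contra ji => /eqP/ginj ->.
apply: efac_antip_neq; apply: contra ji => /eqP/ginj ->; by [].
Qed.

Lemma pp_diag_neq0 i : bieval a (delta i) (Some (g i)) != 0.
Proof. by apply/eqP => h; apply: (hanti (x := (delta i, Some (g i)))). Qed.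

Definition mu i := bieval a (delta i) (Some (g i)) / Pi g i (delta i) (Some (g i)).

Lemma mu_neq0 i : mu i != 0.
Proof. by rewrite mulf_neq0 ?invr_eq0 ?pp_diag_neq0 ?Pi_diag_neq0. Qed.

Lemma pp_rep eta zeta : bieval a eta zeta = \sum_i mu i * Pi g i eta zeta.
Proof.
apply/eqP; rewrite -subr_eq0; apply/eqP; move: eta zeta.
pose D eta zeta := bieval a eta zeta - \sum_i mu i * Pi g i eta zeta.
have Dz j eta : D eta (Some (g j)) = 0.
  have hf : isform N (fun eta => D eta (Some (g j))).
    apply: isformD; first exact: bieval_form_e.
    apply: isformN; apply: isform_sum => i _.
    exact: (isformZ _ (Pi_form_e g i _)).
  apply: (form_zero (s := [seq delta i | i <- enum 'I_N.+1]) hf) => //.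
  - by rewrite map_inj_uniq ?enum_uniq //; exact: delta_inj.
  - by rewrite size_map size_enum_ord.
  move=> x /mapP [k _ ->]; rewrite /D.
  have [kj|kj] := eqVneq k j.
    rewrite kj (bigD1 j) //= big1 ?addr0 => [|i ij]; last first.
      by rewrite Pi_zero_z ?mulr0 // eq_sym.
    by rewrite /mu mulfVK ?Pi_diag_neq0 // subrr.
  rewrite big1 => [|i _]; last by rewrite Pi_grid ?mulr0.
  by rewrite (hgrid kj) subr0.
move=> eta.
have hf : isform N (fun zeta => D eta zeta).
  apply: isformD; first exact: bieval_form_z.
  apply: isformN; apply: isform_sum => i _.
  exact: (isformZ _ (Pi_form_z g i _)).
apply: (form_zero (s := [seq Some (g i) | i <- enum 'I_N.+1]) hf) => //.
- rewrite map_inj_uniq ?enum_uniq //; move=> i j [] /ginj //.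
- by rewrite size_map size_enum_ord.
by move=> x /mapP [k _ ->]; apply: Dz.
Qed.

End Step1.

Definition alpha (x : P1) : C :=
  match x with None => -1 | Some e => if e == 0 then 1 else - (e^*)^-1 end.
Definition beta (x : P1) : C :=
  match x with None => 1 | Some z => if z == 0 then -1 else (z^*)^-1 end.

Lemma alpha_neq0 x : alpha x != 0.
Proof.
case: x => [e|] /=; last by rewrite oppr_eq0; exact: oner_neq0.
have [_|e0] := eqVneq e 0; first exact: oner_neq0.
by rewrite oppr_eq0 invr_eq0 conjC_eq0.
Qed.

Lemma beta_neq0 x : beta x != 0.
Proof.
case: x => [e|] /=; last exact: oner_neq0.
have [_|e0] := eqVneq e 0; first by rewrite oppr_eq0; exact: oner_neq0.
by rewrite invr_eq0 conjC_eq0.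
Qed.

Lemma zfac_antip g x : zfac g (antip x) = alpha x * (efac g x)^*.
Proof.
case: x => [e|] /=; last by rewrite sub0r conjCK mulN1r.
have [->|e0] := eqVneq e 0; first by rewrite /= mul0r addr0 rmorph1 mulr1.
rewrite /= rmorphD rmorph1 rmorphM /= conjCK.
have ec : e^* != 0 by rewrite conjC_eq0.
by field.
Qed.

Lemma efac_antip g x : efac g (antip x) = beta x * (zfac g x)^*.
Proof.
case: x => [z|] /=; last by rewrite mul0r addr0 rmorph1 mulr1.
have [->|z0] := eqVneq z 0; first by rewrite /= sub0r rmorphN mulN1r opprK.
rewrite /= rmorphB.
have zc : z^* != 0 by rewrite conjC_eq0.
by field.
Qed.

Lemma prod_const_neq N (i : 'I_N.+1) (c : C) : \prod_(j < N.+1 | j != i) c = c ^+ N.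
Proof. by rewrite prodr_const cardC1 card_ord. Qed.

Lemma Pi_tau N (g : 'I_N.+1 -> C) i eta zeta :
  Pi g i (antip zeta) (antip eta) = (alpha eta * beta zeta) ^+ N * (Pi g i eta zeta)^*.
Proof.
rewrite /Pi rmorph_prod -(prod_const_neq i) -big_split /=.
apply: eq_bigr => j _; rewrite zfac_antip efac_antip rmorphM /=.
by rewrite mulrACA [X in _ * X]mulrC.
Qed.

Lemma lead_of (R : nzSemiRingType) (p : {poly R}) n : (size p <= n.+1)%N -> p`_n != 0 ->
  lead_coef p = p`_n /\ size p = n.+1.
Proof.
move=> hs hn.
have sz : size p = n.+1.
  apply/eqP; rewrite eqn_leq hs /=; apply: contraR hn; rewrite -leqNgt => h.
  by rewrite nth_default.
by rewrite lead_coefE sz.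
Qed.

Lemma sep_of_res (p : {poly C}) : p != 0 -> resultant p p^`() != 0 -> separable_poly p.
Proof.
move=> p0; rewrite resultant_eq0 -leqNgt => h.
rewrite separable_poly.unlock /coprimep eqn_leq h /= lt0n size_poly_eq0 gcdp_eq0.
by rewrite negb_and p0.
Qed.

Lemma res_of_sep (p : {poly C}) : separable_poly p -> resultant p p^`() != 0.
Proof.
by rewrite separable_poly.unlock /coprimep resultant_eq0 => /eqP ->.
Qed.

Lemma exists_nonroot (Q : {poly C}) : Q != 0 -> exists x, Q.[x] != 0.
Proof.
move=> Q0.
pose rs := [seq (n%:R : C) | n <- iota 0 (size Q)].
have urs : uniq rs.
  rewrite map_inj_uniq ?iota_uniq // => m n /eqP; rewrite eqr_nat => /eqP //.
have : ~~ all (root Q) rs.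
  by apply/negP => ars; have := max_poly_roots Q0 ars urs; rewrite size_map size_iota ltnn.
by case/allPn => x _ /rootP/eqP hx; exists x.
Qed.

Section Polys.
Variables (N : nat) (g : 'I_N.+1 -> C).
Hypothesis ginj : injective g.

Definition Lp i : {poly C} := \prod_(j < N.+1 | j != i) ('X - (g j)%:P).
Definition Ep i : {poly C} := \prod_(j < N.+1 | j != i) (1 + (g j)^* *: 'X).

Lemma Lp_seq i : Lp i = \prod_(z <- [seq g j | j <- index_enum 'I_N.+1 & j != i]) ('X - z%:P).
Proof. by rewrite big_map big_filter. Qed.

Lemma uniq_seq i : uniq [seq g j | j <- index_enum 'I_N.+1 & j != i].
Proof.
by rewrite map_inj_uniq // filter_uniq // index_enum_uniq.
Qed.

Lemma size_Lp i : size (Lp i) = N.+1.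
Proof.
rewrite Lp_seq size_prod_XsubC size_map size_filter.
by rewrite count_neq.
Qed.

Lemma Lp_coefN i : (Lp i)`_N = 1.
Proof.
have := monic_prod_XsubC (index_enum 'I_N.+1) (fun j => j != i) g.
by move/monicP; rewrite -/(Lp i) lead_coefE size_Lp.
Qed.

Lemma Lp_eval i z : (Lp i).[z] = \prod_(j < N.+1 | j != i) zfac (g j) (Some z).
Proof. by rewrite horner_prod; apply: eq_bigr => j _; rewrite hornerXsubC. Qed.

Lemma Ep_eval i e : (Ep i).[e] = \prod_(j < N.+1 | j != i) efac (g j) (Some e).
Proof.
rewrite horner_prod; apply: eq_bigr => j _.
by rewrite hornerD hornerC hornerZ hornerX mulrC.
Qed.

Lemma Pi_Some i e z : Pi g i (Some e) (Some z) = (Ep i).[e] * (Lp i).[z].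
Proof. by rewrite Pi_split Ep_eval Lp_eval. Qed.

Lemma Lp_at_neq i k : k != i -> (Lp i).[g k] = 0.
Proof. by move=> ki; rewrite Lp_eval (bigD1 k) //= subrr mul0r. Qed.

Lemma Lp_at_eq i : (Lp i).[g i] != 0.
Proof.
rewrite Lp_eval; apply/prodf_neq0 => j ji /=.
by rewrite subr_eq0; apply: contra ji => /eqP/ginj ->.
Qed.

Lemma sumL_at (d : 'I_N.+1 -> C) k :
  (\sum_i d i *: Lp i).[g k] = d k * (Lp k).[g k].
Proof.
rewrite horner_sum (bigD1 k) //= hornerZ big1 ?addr0 // => i ik.
by rewrite hornerZ Lp_at_neq ?mulr0 // eq_sym.
Qed.

Lemma size_sumL (d : 'I_N.+1 -> C) : (size (\sum_i d i *: Lp i)%R <= N.+1)%N.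
Proof.
apply: leq_trans (size_sum _ _ _) _; apply/bigmax_leqP => i _.
by apply: leq_trans (size_scale_leq _ _) _; rewrite size_Lp.
Qed.

Lemma Ep_neq0 i : Ep i != 0.
Proof.
apply/prodf_neq0 => j _; apply/eqP => /(congr1 (fun p : {poly C} => p`_0)).
rewrite coefD coefC coefZ coefX /= mulr0 addr0 coef0 => /eqP.
by rewrite oner_eq0.
Qed.

End Polys.

Section Step2.
Variables (N : nat) (a : 'M[C]_(N.+1, N.+1)) (g : 'I_N.+1 -> C).
Hypothesis N1 : (1 <= N)%N.
Hypothesis ginj : injective g.
Hypothesis hgrid : admits_grid a g.
Hypothesis hanti : forall x, zeroset a x -> ~ antidiag x.
Hypothesis hreal : real_curve a.

Local Notation mu := (mu a g).
Local Notation Lp := (Lp g).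
Local Notation Ep := (Ep g).

Definition qq eta zeta := \sum_i (mu i)^* * Pi g i eta zeta.

Lemma q_of_p eta zeta : bieval a eta zeta = 0 -> qq eta zeta = 0.
Proof.
move=> h.
have : zeroset a (tau (eta, zeta)) by exact: (proj1 (hreal (eta, zeta)) h).
rewrite /zeroset /= (pp_rep ginj hgrid).
have -> : \sum_i mu i * Pi g i (antip zeta) (antip eta) =
          (alpha eta * beta zeta) ^+ N * (qq eta zeta)^*.
  rewrite /qq rmorph_sum mulr_sumr; apply: eq_bigr => i _.
  by rewrite Pi_tau rmorphM /= conjCK mulrCA.
move/eqP; rewrite mulf_eq0 expf_eq0 mulf_eq0 (negPf (alpha_neq0 _)) (negPf (beta_neq0 _)).
by rewrite andbF /= conjC_eq0 => /eqP.
Qed.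

Definition FF : {poly {poly C}} := \sum_i (mu i *: Ep i)%:P * (Lp i)^:P.

Lemma FF_eval e : map_poly (horner_eval e) FF = \sum_i (mu i * (Ep i).[e]) *: Lp i.
Proof.
rewrite rmorph_sum; apply: eq_bigr => i _.
rewrite rmorphM /= map_polyC /= horner_evalE hornerZ -mul_polyC; congr (_ * _).
rewrite -map_poly_comp map_poly_id // => x _ /=.
by rewrite horner_evalE hornerC.
Qed.

Lemma FF_size : (size FF <= N.+1)%N.
Proof.
apply: leq_trans (size_sum _ _ _) _; apply/bigmax_leqP => i _.
rewrite mul_polyC; apply: leq_trans (size_scale_leq _ _) _.
by rewrite size_map_polyC size_Lp.
Qed.

Lemma FF_coefN : FF`_N = \sum_i mu i *: Ep i.
Proof.
rewrite coef_sum; apply: eq_bigr => i _.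
by rewrite coefCM coef_map /= Lp_coefN mulr1.
Qed.

Lemma conj_mu : exists c, forall k, (mu k)^* = c * mu k.
Proof.
have muN i : mu i != 0 := mu_neq0 ginj hanti i.
have [k gk0] : exists k, g k != 0.
  have o01 : (ord0 : 'I_N.+1) != ord_max by rewrite -val_eqE /= eq_sym -lt0n.
  have [h|h] := eqVneq (g ord0) 0; last by exists ord0.
  exists ord_max; apply: contraNneq o01 => e; apply/eqP; apply: ginj; by rewrite h e.
set e1 := - ((g k)^*)^-1.
have de1 : delta g k = Some e1 by rewrite /delta /= (negPf gk0).
have Ep_e1 i : (Ep i).[e1] = \prod_(j < N.+1 | j != i) efac (g j) (delta g k).
  by rewrite Ep_eval de1.
have Ep_e1_neq i : i != k -> (Ep i).[e1] = 0.
  by move=> ik; rewrite Ep_e1 (bigD1 k) 1?eq_sym // [efac _ _]efac_antip0 /= mul0r.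
have Ep_e1_k : (Ep k).[e1] != 0.
  rewrite Ep_e1; apply/prodf_neq0 => j jk; apply: efac_antip_neq.
  by apply: contra jk => /eqP/ginj ->.
set FN := FF`_N.
have FN_e1 : FN.[e1] = mu k * (Ep k).[e1].
  rewrite /FN FF_coefN horner_sum (bigD1 k) //= hornerZ big1 ?addr0 // => i ik.
  by rewrite hornerZ Ep_e1_neq ?mulr0.
have FN_e1_neq : FN.[e1] != 0 by rewrite FN_e1 mulf_neq0 // muN.
have FN0 : FN != 0 by apply: contraNneq FN_e1_neq => ->; rewrite horner0.
have [leadF sizeF] := lead_of FF_size FN0.
have F0 : FF != 0 by rewrite -size_poly_eq0 sizeF.
have sizeFd : (size FF^`() <= N)%N by have := lt_size_deriv F0; rewrite sizeF.
have FdN : FF^`()`_N.-1 = FN *+ N by rewrite coef_deriv prednK.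
have hm e : FN.[e] != 0 -> (FF^`()`_N.-1).[e] != 0.
  by move=> h; rewrite FdN hornerMn mulrn_eq0 negb_or -lt0n N1.
have FdN0 : FF^`()`_N.-1 != 0.
  by apply: contraNneq (hm _ FN_e1_neq) => ->; rewrite horner0.
have szFd1 : (size FF^`() <= N.-1.+1)%N by rewrite prednK.
have [leadFd _] := lead_of szFd1 FdN0.
have resE e : FN.[e] != 0 -> horner_eval e (resultant FF FF^`()) =
    resultant (map_poly (horner_eval e) FF) (map_poly (horner_eval e) FF)^`().
  move=> h; rewrite deriv_map; apply: map_resultant.
    by rewrite leadF; exact: h.
  by rewrite leadFd; exact: (hm e h).
set R := resultant FF FF^`().
have R0 : R != 0.
  have : horner_eval e1 R != 0.
    rewrite resE // FF_eval.
    have -> : \sum_i (mu i * (Ep i).[e1]) *: Lp i = (mu k * (Ep k).[e1]) *: Lp k.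
      rewrite (bigD1 k) //= big1 ?addr0 // => i ik.
      by rewrite Ep_e1_neq // mulr0 scale0r.
    apply: res_of_sep.
    rewrite (eqp_separable (eqp_scale _ (mulf_neq0 (muN k) Ep_e1_k))).
    by rewrite Lp_seq separable_prod_XsubC uniq_seq.
  by move=> h; apply: contraNneq h => e; rewrite horner_evalE e horner0.
pose Q := R * FN * \prod_i Ep i.
have Q0 : Q != 0.
  by rewrite !mulf_neq0 //; apply/prodf_neq0 => i _; exact: Ep_neq0.
have [e0 Qe0] := exists_nonroot Q0.
have Re0 : R.[e0] != 0 by apply: contraNneq Qe0 => h; rewrite !hornerM h !mul0r.
have FNe0 : FN.[e0] != 0 by apply: contraNneq Qe0 => h; rewrite !hornerM h mulr0 mul0r.
have Epe0 i : (Ep i).[e0] != 0.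
  apply: contraNneq Qe0 => h; rewrite !hornerM horner_prod (bigD1 i) //= h mul0r mulr0 //.
set A0 := map_poly (horner_eval e0) FF.
have sizeA0 : size A0 = N.+1 by rewrite size_map_poly_id0 ?sizeF // leadF horner_evalE.
have A00 : A0 != 0 by rewrite -size_poly_eq0 sizeA0.
have sepA0 : separable_poly A0.
  apply: sep_of_res => //; rewrite /A0 -resE // horner_evalE //.
have [r Ar] := closed_field_poly_normal A0.
have lA0 : lead_coef A0 != 0 by rewrite lead_coef_eq0.
have ur : uniq r.
  by rewrite -separable_prod_XsubC -(eqp_separable (eqp_scale _ lA0)) -Ar.
have szr : size r = N by have := sizeA0; rewrite Ar size_scale // size_prod_XsubC => -[].
have rootr z : z \in r -> A0.[z] = 0.
  move=> zr; rewrite Ar hornerZ.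
  have /rootP -> : root (\prod_(x <- r) ('X - x%:P)) z by rewrite root_prod_XsubC.
  by rewrite mulr0.
have A0E : A0 = \sum_i (mu i * (Ep i).[e0]) *: Lp i := FF_eval e0.
have A0z z : A0.[z] = bieval a (Some e0) (Some z).
  rewrite A0E (pp_rep ginj hgrid) horner_sum; apply: eq_bigr => i _.
  by rewrite hornerZ Pi_Some mulrA.
pose B := \sum_i ((mu i)^* * (Ep i).[e0]) *: Lp i.
have Bz z : B.[z] = qq (Some e0) (Some z).
  rewrite /B horner_sum /qq; apply: eq_bigr => i _.
  by rewrite hornerZ Pi_Some mulrA.
have Br z : z \in r -> B.[z] = 0.
  by move=> zr; rewrite Bz; apply: q_of_p; rewrite -A0z rootr.
have A0g0 : A0.[g ord0] != 0.
  by rewrite A0E sumL_at // (mulf_neq0 (mulf_neq0 (muN _) (Epe0 _)) (Lp_at_eq ginj _)).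
pose c := B.[g ord0] / A0.[g ord0].
pose H := B - c *: A0.
have H0 : H = 0.
  apply/eqP; apply: contraT => Hn0.
  have u : uniq (g ord0 :: r).
    by rewrite /= ur andbT; apply: contra A0g0 => /rootr ->.
  have al : all (root H) (g ord0 :: r).
    apply/allP => z; rewrite inE => /orP [/eqP ->|zr]; apply/rootP;
      rewrite /H hornerD hornerN hornerZ.
      by rewrite /c divfK // subrr.
    by rewrite Br // rootr // mulr0 subrr.
  have h1 := max_poly_roots Hn0 al u; rewrite /= szr in h1.
  have h2 : (size H <= N.+1)%N.
    apply: leq_trans (size_add _ _) _; rewrite geq_max size_sumL // size_opp.
    by apply: leq_trans (size_scale_leq _ _) _; rewrite sizeA0.
  by move: (leq_trans h1 h2); rewrite ltnn.
exists c => i.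
have := congr1 (fun p => p.[g i]) H0.
rewrite /H hornerD hornerN hornerZ horner0 /B sumL_at // A0E sumL_at //.
move/eqP; rewrite subr_eq0 => /eqP e.
apply: (mulIf (Lp_at_eq ginj i)); apply: (mulIf (Epe0 i)).
by rewrite mulrAC e; ring.
Qed.

End Step2.

Local Notation RR := Rdefinitions.R.

Lemma real_of_conj (x : C) : x^* = x -> x = (complex.Re x)%:C%C.
Proof.
case: x => u v; rewrite [Num.conj _]/= => -[] h.
have -> : v = 0 by lra.
by [].
Qed.

Lemma Pi_anti N (g : 'I_N.+1 -> C) i x :
  Pi g i (antip x) x = beta x ^+ N * \prod_(j < N.+1 | j != i) (zfac (g j) x * (zfac (g j) x)^*).
Proof.
rewrite /Pi -(prod_const_neq i) -big_split /=.
by apply: eq_bigr => j _; rewrite efac_antip mulrCA.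
Qed.

Section Step3.
Variables (N : nat) (a : 'M[C]_(N.+1, N.+1)) (g : 'I_N.+1 -> C).
Hypothesis N1 : (1 <= N)%N.
Hypothesis ginj : injective g.
Hypothesis hgrid : admits_grid a g.
Hypothesis hanti : forall x, zeroset a x -> ~ antidiag x.
Hypothesis hreal : real_curve a.

Local Notation mu := (mu a g).

Definition rho i := mu i / mu ord0.

Lemma muN i : mu i != 0.
Proof. exact: mu_neq0 ginj hanti i. Qed.

Lemma rho_real i : (rho i)^* = rho i.
Proof.
have [c hc] := conj_mu N1 ginj hgrid hanti hreal.
have c0 : c != 0.
  by apply: contraNneq (muN ord0) => e; move: (hc ord0); rewrite e mul0r => /eqP; rewrite conjC_eq0.
have m0 := muN ord0.
rewrite /rho fmorph_div /= !hc; field.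
by rewrite c0 m0.
Qed.

Lemma rho_neq0 i : rho i != 0.
Proof. exact: mulf_neq0 (muN i) (invr_neq0 (muN ord0)). Qed.

Lemma rho0 : rho ord0 = 1.
Proof. by rewrite /rho divff ?muN. Qed.

Definition W (z : C) := \sum_i rho i * \prod_(j < N.+1 | j != i) (zfac (g j) (Some z) * (zfac (g j) (Some z))^*).

Lemma W_neq0 z : W z != 0.
Proof.
have h : bieval a (antip (Some z)) (Some z) != 0.
  by apply/eqP => h; apply: (hanti (x := (antip (Some z), Some z))).
apply: contra h => /eqP hW.
rewrite (pp_rep ginj hgrid).
have -> : \sum_i mu i * Pi g i (antip (Some z)) (Some z) = beta (Some z) ^+ N * mu ord0 * W z.
  rewrite /W !mulr_sumr; apply: eq_bigr => i _.
  rewrite Pi_anti /rho; have := muN ord0; move: (mu ord0) => m m0; field.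
  by rewrite m0.
by rewrite hW mulr0.
Qed.

Lemma Pl_gt0 l : 0 < \prod_(j < N.+1 | j != l) (zfac (g j) (Some (g l)) * (zfac (g j) (Some (g l)))^*).
Proof.
apply: prodr_gt0 => j jl; rewrite mul_conjC_gt0 /= subr_eq0.
by apply: contra jl => /eqP/ginj ->.
Qed.

Lemma W_at l : W (g l) = rho l * \prod_(j < N.+1 | j != l) (zfac (g j) (Some (g l)) * (zfac (g j) (Some (g l)))^*).
Proof.
rewrite /W (bigD1 l) //= [X in _ + X]big1 ?addr0 // => i il.
have li : l != i by rewrite eq_sym.
by rewrite (bigD1 l li) /= subrr mul0r mul0r mulr0.
Qed.

Definition rr i : RR := complex.Re (rho i).

Lemma rho_eq i : rho i = (rr i)%:C%C.
Proof. exact: real_of_conj (rho_real i). Qed.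

Lemma rr_pos i : 0 < rr i.
Proof.
have rn0 : rr i != 0.
  apply: contraNneq (rho_neq0 i) => e; rewrite rho_eq e; by [].
rewrite lt_neqAle eq_sym rn0 /=; apply: contraT; rewrite -ltNge => hneg.
set b := g i - g ord0.
pose fac j := ((g ord0 - g j)%:P + b *: 'X) * (((g ord0 - g j)^*)%:P + b^* *: 'X).
pose G : {poly C} := \sum_l rho l *: \prod_(j < N.+1 | j != l) fac j.
have G_eval t : G.[(t%:C)%C] = W (g ord0 + (t%:C)%C * b).
  rewrite /G /W horner_sum; apply: eq_bigr => l _; rewrite hornerZ horner_prod; congr (_ * _).
  apply: eq_bigr => j _.
  have ct : ((t%:C)%C)^* = (t%:C)%C := conjc_real t.
  rewrite /fac hornerM !hornerD !hornerC !hornerZ hornerX /=.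
  rewrite /b !rmorphB !rmorphD rmorphM /= ct; ring.
have G_conj : map_poly Num.conj G = G.
  rewrite /G rmorph_sum; apply: eq_bigr => k0 _.
  rewrite /= map_polyZ rmorph_prod /= rho_real; congr (_ *: _); apply: eq_bigr => j _.
  have mlin (c d : C) : map_poly Num.conj (c%:P + d *: 'X) = (c^*)%:P + (d^*) *: 'X.
    by rewrite rmorphD /= map_polyC map_polyZ map_polyX.
  by rewrite /fac rmorphM /= !mlin !conjCK mulrC.
have G_real : G = map_poly (real_complex RR) (map_poly (@complex.Re RR) G).
  apply/polyP => n; rewrite coef_map /= coef_map_id0 //.
  by apply: real_of_conj; rewrite -[in RHS]G_conj coef_map.
set gR := map_poly (@complex.Re RR) G in G_real.
have gR_eval t : ((gR.[t])%:C)%C = W (g ord0 + (t%:C)%C * b).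
  by rewrite -G_eval [in RHS]G_real horner_map.
have h0 : 0 < gR.[0].
  have := gR_eval 0; rewrite rmorph0 mul0r addr0 W_at rho0 mul1r => e.
  by rewrite -ltcR e; exact: Pl_gt0.
have h1 : gR.[1] < 0.
  have := gR_eval 1; rewrite rmorph1 mul1r addrC subrK W_at rho_eq => e.
  rewrite -ltcR e pmulr_llt0; last exact: Pl_gt0.
  by rewrite ltcR.
have hm : gR.[0] * gR.[1] <= 0 by rewrite pmulr_rle0 // ltW.
have [x _ rx] := polyrcf.poly_ivt ler01 hm.
have := gR_eval x; rewrite (rootP rx) rmorph0 => /esym/eqP.
by rewrite (negPf (W_neq0 _)).
Qed.

End Step3.

Unset Implicit Arguments.
Theorem mainTheorem3 (N : nat) (a : 'M[C]_(N.+1, N.+1)) (g : 'I_N.+1 -> C) :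
  (1 <= N)%N ->
  a != 0 ->
  real_curve a ->
  (forall x, zeroset a x -> ~ antidiag x) ->
  injective g ->
  admits_grid a g ->
  exists lam : 'I_N.+1 -> Rdefinitions.R,
    (forall i, 0 < lam i) /\
    (forall x : P1 * P1, zeroset a x <-> jnr_eval g lam x = 0).
Proof.
move=> N1 a0 hreal hanti ginj hgrid.
have rpos i := rr_pos N1 ginj hgrid hanti hreal i.
exists (fun i => Num.sqrt (rr a g i)).
split => [i|x]; first by rewrite sqrtr_gt0.
have hl i : (((Num.sqrt (rr a g i)) ^+ 2)%:C)%C = rho a g i.
  by rewrite sqr_sqrtr ?ltW // -(rho_eq N1 ginj hgrid hanti hreal).
have m0 := muN ginj hanti ord0.
have e : bieval a x.1 x.2 = mu a g ord0 * jnr_eval g (fun i => Num.sqrt (rr a g i)) x.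
  rewrite (pp_rep ginj hgrid) /jnr_eval mulr_sumr; apply: eq_bigr => i _.
  by rewrite hl /rho -/(Pi g i x.1 x.2) mulrA mulrCA divff // mulr1.
rewrite /zeroset e; split => [/eqP|->]; last by rewrite mulr0.
by rewrite mulf_eq0 (negPf m0) => /eqP.
Qed.
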